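(* Consider the system (S) below with all parameters $b_1,b_2,b_3,a_{11},a_{12},a_{13},a_{21},a_{23},a_{31},a_{32}>0$ and $c>0$, and assume $a_{31}b_1>a_{11}b_3$. Then $$E_2=\Big(x_2,0,z_2\Big),\qquad x_2=\frac{b_3}{a_{31}},\quad z_2=\frac{b_1-a_{11}x_2}{a_{13}}>0,$$ is an equilibrium of (S), and if $a_{31}b_2>a_{21}b_3$ then $E_2$ is locally asymptotically stable (all eigenvalues of the Jacobian matrix of (S) at $E_2$ have negative real parts).
   Context: Let $x,y,z\ge 0$ denote prey, intermediate predator and top predator densities. The system (S), an intraguild predation Lotka–Volterra model with top-predator feeding switching of intensity $c$, is $$\dot x=(b_1-a_{11}x)x-a_{12}xy-\frac{a_{13}x^2z}{x+cy},\qquad \dot y=-b_2y+a_{21}xy-\frac{a_{23}y^2z}{y+cx},\qquad \dot z=-b_3z+\frac{a_{31}x^2z}{x+cy}+\frac{a_{32}y^2z}{y+cx},$$ defined on the closed nonnegative orthant minus the origin (where $x+cy>0$ and $y+cx>0$), the right-hand side being smooth in a neighbourhood of every equilibrium with $x>0$. (The fractions are the switching terms $\frac{a_{13}xz}{1+cy/x}$ etc. written with cleared denominators.) *)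

(* Defs.v *)
From Stdlib Require Import Reals Lra.
Open Scope R_scope.

Record params := Params {
  b1 : R; b2 : R; b3 : R;
  a11 : R; a12 : R; a13 : R;
  a21 : R; a23 : R;
  a31 : R; a32 : R;
  sw : R (* switching intensity c *) }.

Definition fx (p : params) (x y z : R) : R :=
  (b1 p - a11 p * x) * x - a12 p * x * y - a13 p * x ^ 2 * z / (x + sw p * y).
Definition fy (p : params) (x y z : R) : R :=
  - b2 p * y + a21 p * x * y - a23 p * y ^ 2 * z / (y + sw p * x).
Definition fz (p : params) (x y z : R) : R :=
  - b3 p * z + a31 p * x ^ 2 * z / (x + sw p * y) + a32 p * y ^ 2 * z / (y + sw p * x).

Definition field (p : params) (i : nat) : R -> R -> R -> R :=
  match i with 0%nat => fx p | 1%nat => fy p | _ => fz p end.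

Definition upd (x y z : R) (j : nat) (t : R) : R * R * R :=
  match j with
  | 0%nat => (t, y, z) | 1%nat => (x, t, z) | _ => (x, y, t) end.

Definition coord (x y z : R) (j : nat) : R :=
  match j with 0%nat => x | 1%nat => y | _ => z end.

Definition partial_fun (p : params) (i j : nat) (x y z : R) : R -> R :=
  fun t => let '(u, v, w) := upd x y z j t in field p i u v w.

Definition is_jacobian (p : params) (x y z : R) (J : nat -> nat -> R) : Prop :=
  forall i j : nat, (i < 3)%nat -> (j < 3)%nat ->
    derivable_pt_lim (partial_fun p i j x y z) (coord x y z j) (J i j).

Definition is_equilibrium (p : params) (x y z : R) : Prop :=
  fx p x y z = 0 /\ fy p x y z = 0 /\ fz p x y z = 0.

(* Minimal complex arithmetic on pairs (re, im). *)
Definition Cx := (R * R)%type.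
Definition Cadd (u v : Cx) : Cx := (fst u + fst v, snd u + snd v).
Definition Csub (u v : Cx) : Cx := (fst u - fst v, snd u - snd v).
Definition Cmul (u v : Cx) : Cx :=
  (fst u * fst v - snd u * snd v, fst u * snd v + snd u * fst v).
Definition Cof (r : R) : Cx := (r, 0).

Definition det3C (M : nat -> nat -> Cx) : Cx :=
  Csub
   (Cadd (Cadd (Cmul (M 0%nat 0%nat) (Cmul (M 1%nat 1%nat) (M 2%nat 2%nat)))
               (Cmul (M 0%nat 1%nat) (Cmul (M 1%nat 2%nat) (M 2%nat 0%nat))))
         (Cmul (M 0%nat 2%nat) (Cmul (M 1%nat 0%nat) (M 2%nat 1%nat))))
   (Cadd (Cadd (Cmul (M 0%nat 2%nat) (Cmul (M 1%nat 1%nat) (M 2%nat 0%nat)))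
               (Cmul (M 0%nat 1%nat) (Cmul (M 1%nat 0%nat) (M 2%nat 2%nat))))
         (Cmul (M 0%nat 0%nat) (Cmul (M 1%nat 2%nat) (M 2%nat 1%nat)))).

Definition is_eigenvalue (J : nat -> nat -> R) (lam : Cx) : Prop :=
  det3C (fun i j => Csub (if Nat.eqb i j then lam else Cof 0) (Cof (J i j)))
  = Cof 0.

(* Main.v *)
Require Import Defs.
From Stdlib Require Import Reals Lra Psatz.
From Coquelicot Require Import Coquelicot.
Open Scope R_scope.

Lemma eig_lemma (a b d s P : R) : d < 0 -> 0 < s -> 0 < P ->
  (a-d)*(a*a-b*b+s*a+P) - b*(2*a*b+s*b) = 0 ->
  (a-d)*(2*a*b+s*b) + b*(a*a-b*b+s*a+P) = 0 -> a < 0.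
Proof.
  intros Hd Hs HP E1 E2.
  set (qa := a*a-b*b+s*a+P) in *. set (qb := 2*a*b+s*b) in *.
  assert (H: ((a-d)^2+b^2)*(qa^2+qb^2) = 0) by nra.
  destruct (Rmult_integral _ _ H) as [H1|H1].
  - nra.
  - assert (qa = 0) by nra. assert (qb = 0) by nra.
    unfold qa, qb in *.
    destruct (Rle_or_lt 0 a) as [Ha|Ha]; [|lra].
    assert (b*(2*a+s) = 0) by lra.
    destruct (Rmult_integral _ _ H3) as [Hb|Hb]; [subst b; nra| lra].
Qed.


Definition Jv (p : params) (x z : R) (i j : nat) : R :=
  match i, j with
  | 0%nat, 0%nat => b1 p - 2 * a11 p * x - a13 p * z
  | 0%nat, 1%nat => - a12 p * x + a13 p * sw p * z
  | 0%nat, _ => - a13 p * x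
  | 1%nat, 0%nat => 0
  | 1%nat, 1%nat => - b2 p + a21 p * x
  | 1%nat, _ => 0
  | _, 0%nat => a31 p * z
  | _, 1%nat => - a31 p * sw p * z
  | _, _ => - b3 p + a31 p * x
  end.

Ltac side := repeat split; try exact I; try (intro; nra).

Lemma jac_ok p x z : 0 < x -> 0 < sw p -> is_jacobian p x 0 z (Jv p x z).
Proof.
  intros Hx Hc i j Hi Hj.
  destruct i as [|[|[|i]]]; try lia; destruct j as [|[|[|j]]]; try lia;
  apply is_derive_Reals; unfold partial_fun; simpl; unfold fx, fy, fz;
  auto_derive; side; field; side.
Qed.

Theorem mainTheorem2 (p : params) :
  0 < b1 p -> 0 < b2 p -> 0 < b3 p -> 0 < a11 p -> 0 < a12 p -> 0 < a13 p ->
  0 < a21 p -> 0 < a23 p -> 0 < a31 p -> 0 < a32 p -> 0 < sw p ->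
  a31 p * b1 p > a11 p * b3 p ->
  let x2 := b3 p / a31 p in
  let z2 := (b1 p - a11 p * x2) / a13 p in
  0 < z2 /\ is_equilibrium p x2 0 z2 /\
  (a31 p * b2 p > a21 p * b3 p ->
     (exists J, is_jacobian p x2 0 z2 J) /\
     forall J, is_jacobian p x2 0 z2 J ->
       forall lam, is_eigenvalue J lam -> fst lam < 0).
Proof.
  intros H1 H2 H3 H4 H5 H6 H7 H8 H9 H10 Hc Hg x2 z2.
  assert (Hx : 0 < x2) by (unfold x2; apply Rdiv_lt_0_compat; lra).
  assert (Hxe : a31 p * x2 = b3 p) by (unfold x2; field; lra).
  assert (Hze : a13 p * z2 = b1 p - a11 p * x2) by (unfold z2; field; lra).
  assert (Hz : 0 < z2).
  { unfold z2; apply Rdiv_lt_0_compat; [|lra]. unfold x2.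
    assert (a11 p * (b3 p / a31 p) < b1 p); [|lra].
    apply (Rmult_lt_reg_l (a31 p)); [lra|]. field_simplify; lra. }
  split; [exact Hz|]. split.
  { unfold is_equilibrium, fx, fy, fz. repeat split.
    - replace (x2 + sw p * 0) with x2 by ring. field_simplify; [|lra].
      replace (x2 * a13 p * z2) with (x2 * (a13 p * z2)) by ring. rewrite Hze. ring.
    - field. nra.
    - replace (x2 + sw p * 0) with x2 by ring. replace (a31 p * x2 ^ 2 * z2 / x2) with (z2 * (a31 p * x2)) by (field; lra).
      rewrite Hxe. unfold Rdiv. ring. }
  intros Hs. split; [exists (Jv p x2 z2); apply jac_ok; lra|].
  intros J HJ [a b] Hev.
  assert (E : forall i j, (i < 3)%nat -> (j < 3)%nat -> J i j = Jv p x2 z2 i j).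
  { intros i j Hi Hj. eapply uniqueness_limite; [apply HJ; auto|].
    apply jac_ok; auto. }
  unfold is_eigenvalue, det3C, Csub, Cadd, Cmul, Cof in Hev. simpl in Hev.
  rewrite !E in Hev by lia. simpl in Hev.
  injection Hev as E1 E2.
  assert (J00 : b1 p - 2 * a11 p * x2 - a13 p * z2 = - (a11 p * x2)) by lra.
  assert (J22 : - b3 p + a31 p * x2 = 0) by lra.
  rewrite J00, J22 in *.
  simpl.
  apply (eig_lemma a b (- b2 p + a21 p * x2) (a11 p * x2) (a13 p * a31 p * x2 * z2)).
  - assert (a21 p * x2 < b2 p); [|lra].
    apply (Rmult_lt_reg_l (a31 p)); [lra|].
    replace (a31 p * (a21 p * x2)) with (a21 p * (a31 p * x2)) by ring. nra.
  - nra.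
  - apply Rmult_lt_0_compat; [|lra]. apply Rmult_lt_0_compat; nra.
  - etransitivity; [|exact E1]. ring.
  - etransitivity; [|exact E2]. ring.
Qed.
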